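(* Let $G$ be a finite group, $m$ a positive integer and $n$ a positive odd integer. Then $P_e(G)\cong P_e\big((\prod_{i=1}^{m}\mathbb{Z}_2)\times\mathbb{Z}_n\big)$ if and only if $G\cong (\prod_{i=1}^{m}\mathbb{Z}_2)\times\mathbb{Z}_n$.
   Context: All groups are finite. $\mathbb{Z}_k$ denotes the cyclic group of order $k$, and $\prod_{i=1}^m\mathbb{Z}_2$ the direct product of $m$ copies of $\mathbb{Z}_2$. For a group $X$, the enhanced power graph $P_e(X)$ is the simple graph with vertex set $X$ in which two distinct vertices $x,y$ are adjacent if and only if $\langle x,y\rangle$ is cyclic. *)

(* Defs.v *)
From HB Require Import structures.
From mathcomp Require Import all_boot all_fingroup all_algebra all_solvable.
Set Implicit Arguments. Unset Strict Implicit. Unset Printing Implicit Defensive.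
Local Open Scope group_scope.

Definition epg_adj (gT : finGroupType) (x y : gT) : bool :=
  (x != y) && cyclic <<[set x; y]>>.

Definition epg_isomorphic (gT hT : finGroupType) (G : {set gT}) (H : {set hT}) : Prop :=
  exists f : gT -> hT,
    [/\ {in G &, injective f}, f @: G = H &
        {in G &, forall x y, epg_adj (f x) (f y) = epg_adj x y}].

Definition Z2m_Zn_type (m n : nat) : finGroupType :=
  ({dffun forall i : 'I_m, 'Z_2} * 'Z_n)%type.

(* The group (prod_{i=1}^m Z_2) x Z_n: all of the first factor times the
   cyclic subgroup Zp n of order n (which is all of 'Z_n when n > 1, and
   trivial when n = 1). *)
Definition Z2m_Zn (m n : nat) : {set Z2m_Zn_type m n} :=
  setX [set: {dffun forall i : 'I_m, 'Z_2}] (Zp n).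

Lemma Z2m_Zn_group_set m n : group_set (Z2m_Zn m n).
Proof. exact: groupP (setX_group _ _). Qed.
Canonical Z2m_Zn_group m n := Group (Z2m_Zn_group_set m n).

(* Main.v *)
Require Import Defs.
From HB Require Import structures.
From mathcomp Require Import all_boot all_fingroup all_algebra all_solvable.
Set Implicit Arguments. Unset Strict Implicit. Unset Printing Implicit Defensive.
Local Open Scope group_scope.

Definition cy (gT : finGroupType) (x y : gT) : bool := cyclic <<[set x; y]>>.

Lemma cy_refl (gT : finGroupType) (x : gT) : cy x x.
Proof. by rewrite /cy setUid cycle_cyclic. Qed.

Lemma cy_sym (gT : finGroupType) (x y : gT) : cy x y = cy y x.
Proof. by rewrite /cy setUC. Qed.

Lemma cy_sub (gT : finGroupType) (x y x' y' : gT) :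
  cy x y -> x' \in <<[set x; y]>> -> y' \in <<[set x; y]>> -> cy x' y'.
Proof.
move=> c hx hy; apply: cyclicS c.
by rewrite gen_subG subUset !sub1set hx hy.
Qed.

Lemma cy_cycle (gT : finGroupType) (x y : gT) : y \in <[x]> -> cy x y.
Proof.
move=> hy; apply: (@cyclicS _ <[x]>%G); last exact: cycle_cyclic.
by rewrite gen_subG subUset !sub1set cycle_id hy.
Qed.

Lemma cy_gen (gT : finGroupType) (x y : gT) :
  cy x y -> exists w, [/\ <<[set x; y]>> = <[w]>, x \in <[w]> & y \in <[w]>].
Proof.
case/cyclicP=> w hw; exists w; rewrite -hw.
by split => //; apply: mem_gen; rewrite !inE eqxx ?orbT.
Qed.

Lemma cy_commute (gT : finGroupType) (x y : gT) : cy x y -> commute x y.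
Proof.
move/cyclic_abelian/centsP => ab.
by apply: ab; apply: mem_gen; rewrite !inE eqxx ?orbT.
Qed.

Lemma cyc_max (gT : finGroupType) (z y w : gT) :
  <<[set y; z]>> = <[w]> -> #[w] <= #[z] -> y \in <[z]>.
Proof.
move=> e le.
have zw : z \in <[w]> by rewrite -e; apply: mem_gen; rewrite !inE eqxx orbT.
have yw : y \in <[w]> by rewrite -e; apply: mem_gen; rewrite !inE eqxx.
have sub : <[z]> \subset <[w]> by rewrite cycle_subG.
have /eqP -> : <[z]> == <[w]> by rewrite eqEcard sub.
done.
Qed.

Lemma all_cy_cyclic (gT : finGroupType) (G : {group gT}) :
  {in G &, forall x y, cy x y} -> cyclic G.
Proof.
move=> hc.
have g1 : (1 : gT) \in G by [].
case: (arg_maxnP (fun z : gT => #[z]) g1) => z zG0 zmax.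
have zG : z \in G := zG0.
apply/cyclicP; exists z; apply/eqP; rewrite eqEsubset cycle_subG.
apply/andP; split; last exact: zG.
apply/subsetP => y yG.
have [w [e _ _]] := cy_gen (hc _ _ yG zG).
have wG : w \in G.
  have : w \in <[w]> := cycle_id w.
  rewrite -e; apply/subsetP; rewrite gen_subG subUset !sub1set yG zG //.
exact: cyc_max e (zmax w wG).
Qed.


Notation AT m := {dffun forall i : 'I_m, 'Z_2}.

Lemma sqA m (a : AT m) : a * a = 1.
Proof.
apply/ffunP => i. rewrite !ffunE.
by case: (a i) => k hk; apply/val_inj => /=; case: k hk => [|[|]].
Qed.

Lemma cmA m (a b : AT m) : a * b = b * a.
Proof.
apply/ffunP => i. rewrite !ffunE.
by case: (a i) => k hk; case: (b i) => l hl; apply/val_inj => /=; rewrite addnC.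
Qed.

Lemma cardA m : #|AT m| = (2 ^ m)%N.
Proof.
have E : forall s : seq 'I_m, foldr muln 1%N [seq #|'Z_2| | _ <- s] = (2 ^ size s)%N.
  by elim=> //= x s ->; rewrite expnS card_ord.
by rewrite card_dep_ffun E -cardE card_ord.
Qed.

Lemma expA m (a : AT m) k : a ^+ k = if odd k then a else 1.
Proof.
elim: k => [|k IH]; first by rewrite expg0.
rewrite expgS IH /=; case: (odd k) => /=; first by rewrite sqA.
by rewrite mulg1.
Qed.

Lemma cmZ n (a b : 'Z_n) : a * b = b * a.
Proof. by case: a => k hk; case: b => l hl; apply/val_inj => /=; rewrite addnC. Qed.

Lemma pair_exp m n (h : Z2m_Zn_type m n) k : (h ^+ k).1 = h.1 ^+ k.
Proof.
elim: k => [|k IH]; first by rewrite !expg0.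
by rewrite !expgS -IH; case: h {IH} => a b; case: (_ ^+ k).
Qed.

Lemma cmH m n (h h' : Z2m_Zn_type m n) : commute h h'.
Proof.
case: h => a b; case: h' => c d.
by rewrite /commute /mulg /=; congr (_, _); [apply: cmA | apply: cmZ].
Qed.

Lemma Zp_cyc n : cyclic (Zp n).
Proof.
apply: (cyclicS _ (cycle_cyclic (@Zp1 (Zp_trunc n).+1))).
apply/subsetP => x _. have := Zp_cycle (Zp_trunc n).+1.
move/setP/(_ x). rewrite inE. by move=> <-.
Qed.

Lemma cyH m n (h h' : Z2m_Zn_type m n) : odd n -> h.2 \in Zp n -> h'.2 \in Zp n ->
  cy h h' = [|| h.1 == 1, h'.1 == 1 | h.1 == h'.1].
Proof.
move=> on h2 h'2; apply/idP/idP.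
  case/cy_gen => u [_ hu h'u].
  case/cycleP: hu => i ->; case/cycleP: h'u => j ->.
  by rewrite !pair_exp !expA; case: (odd i); case: (odd j); rewrite ?eqxx ?orbT.
move=> H.
set v := if h.1 == 1 then h'.1 else h.1.
have [hv h'v] : h.1 \in <[v]> /\ h'.1 \in <[v]>.
  rewrite /v; case: eqP H => [-> _| ne /= /orP[/eqP->|/eqP<-]]; 
    by split; rewrite ?group1 ?cycle_id.
have cC : cyclic (setX <[v]> (Zp n)).
  rewrite -(dprodW (setX_dprod <[v]>%G (Zp n)%G)).
  apply: cyclicM.
  - by rewrite -(isog_cyclic (isog_setX1 _ <[v]>%G)) cycle_cyclic.
  - rewrite -(isog_cyclic (isog_set1X _ (Zp n)%G)).
    exact: Zp_cyc.
  - by apply/centsP => x _ y _; apply: cmH.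
  - rewrite !cardsX !cards1 muln1 mul1n card_Zp ?odd_gt0 //.
    apply: (coprime_dvdl (n:=2)); last by rewrite coprime2n.
    by rewrite order_dvdn expA.
apply: cyclicS cC.
clearbody v; clear H; move: hv h'v h2 h'2; case: h => a b; case: h' => c d /= *.
by rewrite gen_subG subUset !sub1set !in_setX; apply/andP; split; apply/andP.
Qed.


Lemma structure (gT : finGroupType) (G : {group gT}) (T : eqType) (one : T)
    (g : gT -> T) (n : nat) :
  0 < n ->
  {in G &, forall x y, cy x y = [|| g x == one, g y == one | g x == g y]} ->
  (forall v, #|[set x in G | g x == v]| = n) ->
  (forall v, exists w, (w != one) && (w != v)) ->
  exists D : {group gT}, [/\ #|D| = n, cyclic D, D \subset G, G \subset 'C(D)
     & forall x, x \in G -> x ^+ 2 \in D].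
Proof.
move=> n0 hc hfib hA.
set D := [set x in G | g x == one].
have fibne : forall v, exists x, x \in G /\ g x = v.
  move=> v; have : 0 < #|[set x in G | g x == v]| by rewrite hfib.
  by case/card_gt0P => x; rewrite inE => /andP[xG /eqP]; exists x.
have domP : forall x, x \in G -> (x \in D) <-> (forall y, y \in G -> cy x y).
  move=> x xG; split.
    by rewrite inE => /andP[_ gx] y yG; rewrite hc // gx.
  move=> H; rewrite inE xG /=; apply/negPn/negP => ne.
  have [w /andP[w1 wv]] := hA (g x).
  have [y [yG gy]] := fibne w.
  have := H y yG; rewrite hc // gy (negbTE ne) (negbTE w1) eq_sym (negbTE wv).
  done.
have DG : D \subset G by apply/subsetP => x; rewrite inE => /andP[].
have Dcyc : forall x x', x \in D -> x' \in <[x]> -> x' \in D.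
  move=> x x' xD x'x; have xG : x \in G by apply: (subsetP DG).
  have x'G : x' \in G.
    have : <[x]> \subset G by rewrite cycle_subG.
    by move/subsetP; apply.
  apply/(domP _ x'G) => y yG; apply: (cy_sub ((domP _ xG).1 xD y yG)).
    apply: (subsetP (genS _)) x'x; by rewrite sub1set !inE eqxx.
  by apply: mem_gen; rewrite !inE eqxx orbT.
have step2 : forall x, x \in G -> x \notin D -> exists z,
     <[z]> = [set y in G | (g y == one) || (g y == g x)] /\ #[z] = (2 * n)%N.
  move=> x xG xD.
  have gx1 : g x != one by move: xD; rewrite inE xG.
  set L := [set y in G | g y == g x].
  have xL : x \in L by rewrite inE xG eqxx.
  case: (arg_maxnP (fun z => #[z]) xL) => z zL0 zmax.
  have zL : z \in L := zL0.
  move: (zL); rewrite inE => /andP[zG /eqP gz].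
  set K := [set y in G | _].
  have KE : <[z]> = K.
    apply/eqP; rewrite eqEsubset; apply/andP; split; apply/subsetP => y.
      move=> yz; have yG : y \in G.
        have : <[z]> \subset G by rewrite cycle_subG.
        by move/subsetP; apply.
      rewrite inE yG /=; have := cy_cycle yz; rewrite hc // gz.
      by rewrite (negbTE gx1) /= => /orP[->|/eqP->]; rewrite ?eqxx ?orbT.
    rewrite inE => /andP[yG hy].
    have c : cy y z by rewrite hc // gz; case/orP: hy => ->; rewrite ?orbT.
    have [w [e _ zw]] := cy_gen c.
    have wG : w \in G.
      have : w \in <[w]> := cycle_id w.
      by rewrite -e; apply/subsetP; rewrite gen_subG subUset !sub1set yG zG.
    have gw : g w = g x.
      move: (cy_cycle zw); rewrite hc // gz (negbTE gx1) /=.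
      case/orP => [/eqP gw1 | /eqP //].
      have wD : w \in D by rewrite inE wG gw1 eqxx.
      by move: (Dcyc _ _ wD zw); rewrite inE zG gz (negbTE gx1).
    have wL : w \in L by rewrite inE wG gw eqxx.
    exact: cyc_max e (zmax w wL).
  exists z; split => //.
  have -> : #[z] = #|K| by rewrite -KE.
  have KDL : K = D :|: L by apply/setP => y; rewrite !inE andb_orr.
  rewrite KDL cardsU.
  have -> : D :&: L = set0.
    apply/setP => y; rewrite !inE.
    apply/negP => /andP[/andP[_ /eqP h1] /andP[_ /eqP h2]].
    by move: gx1; rewrite -h2 h1 eqxx.
  by rewrite cards0 subn0 !hfib mul2n addnn.
have gD : group_set D.
  apply/group_setP; split.
    apply/(domP _ (group1 G)) => y yG.
    by rewrite cy_sym; apply: cy_cycle; apply: group1.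
  move=> x x' xD x'D.
  have xG : x \in G by apply: (subsetP DG).
  have x'G : x' \in G by apply: (subsetP DG).
  have xx'G : x * x' \in G by rewrite groupM.
  apply/(domP _ xx'G) => y yG.
  case: (boolP (y \in D)) => yD.
    by rewrite cy_sym; apply: (domP _ yG).1 yD _ xx'G.
  have [z [KE _]] := step2 y yG yD.
  have inK : forall u, u \in D -> u \in <[z]>.
    by move=> u; rewrite KE !inE => /andP[-> ->].
  have yK : y \in <[z]> by rewrite KE inE yG eqxx orbT.
  apply: (@cyclicS _ <[z]>%G); last exact: cycle_cyclic.
  by rewrite gen_subG subUset !sub1set yK groupM ?inK.
exists (Group gD); split => //=.
- exact: hfib.
- have [w /andP[w1 _]] := hA one.
  have [x [xG gx]] := fibne w.
  have xD : x \notin D by rewrite inE xG gx (negbTE w1).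
  have [z [KE _]] := step2 x xG xD.
  apply: (@cyclicS _ <[z]>%G (Group gD)); last exact: cycle_cyclic.
  by apply/subsetP => u uD; rewrite /= KE inE (subsetP DG _ uD); move: uD; rewrite inE => /andP[_ ->].
- apply/centsP => y yG x xD.
  by apply: cy_commute; rewrite cy_sym; apply: (domP _ (subsetP DG _ xD)).1.
move=> x xG.
case: (boolP (x \in D)) => xD.
  by apply: (@groupX _ (Group gD)).
have [z [KE oz]] := step2 x xG xD.
have dv : n %| #[z] by rewrite oz dvdn_mull.
have := cycle_sub_group dv.
have inL : Group gD \in [set H : {group gT} | H \subset <[z]> & #|H| == n].
  rewrite inE /= hfib eqxx andbT.
  by apply/subsetP => u uD; rewrite KE inE (subsetP DG _ uD); move: uD; rewrite inE => /andP[_ ->].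
move/setP/(_ (Group gD)); rewrite inL => /esym/set1P/(congr1 val) /= ->.
rewrite oz mulnK //.
have : x \in <[z]> by rewrite KE inE xG eqxx orbT.
case/cycleP => k ->.
by rewrite -expgM mulnC expgM mem_cycle.
Qed.


Lemma dprod_struct (gT : finGroupType) (G D : {group gT}) (m n : nat) :
  #|G| = (2 ^ m * n)%N -> odd n -> #|D| = n -> D \subset G -> G \subset 'C(D) ->
  (forall x, x \in G -> x ^+ 2 \in D) ->
  exists S : {group gT}, [/\ D \x S = G, 2.-abelem S & #|S| = (2 ^ m)%N].
Proof.
move=> oG on oD DG cGD sq.
have [S sylS] := Sylow_exists 2 G.
have SG : S \subset G := pHall_sub sylS.
have oS : #|S| = (2 ^ m)%N.
  have n0 : 0 < n := odd_gt0 on.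
  rewrite (card_Hall sylS) oG partnM ?expn_gt0 //.
  rewrite part_pnat_id; last by rewrite pnatX pnat_id.
  by rewrite part_p'nat ?muln1 // -odd_2'nat.
have TI : D :&: S = 1.
  by apply: coprime_TIg; rewrite oD oS coprimeXr // coprimen2.
have sq1 : forall s, s \in S -> s ^+ 2 = 1.
  move=> s sS.
  have : s ^+ 2 \in D :&: S by rewrite inE sq ?(subsetP SG) // groupX.
  by rewrite TI => /set1P.
have inv : forall s, s \in S -> s^-1 = s.
  by move=> s sS; apply/eqP; rewrite eq_invg_mul -expg2 sq1.
have abS : abelian S.
  apply/centsP => s sS t tS.
  rewrite /commute -{1}(inv _ (groupM sS tS)) invMg inv // inv //.
exists S; split => //.
  rewrite dprodE //; last exact: subset_trans SG cGD.
  apply/eqP; rewrite eqEcard mul_subG //= (TI_cardMg TI) oG oD oS mulnC.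
  by [].
by apply/abelemP => //; split.
Qed.


Lemma isog_epg (gT : finGroupType) (G : {group gT}) (m n : nat) :
  (G \isog Z2m_Zn m n)%g -> epg_isomorphic G (Z2m_Zn m n).
Proof.
case/isogP => f injf imf.
have injf' : {in G &, injective f} by apply/injmP.
exists f; split => //; first by rewrite -morphimEdom.
move=> x y xG yG.
rewrite /epg_adj (inj_in_eq injf') //; congr (_ && _).
have sub : [set x; y] \subset G by rewrite subUset !sub1set xG yG.
have -> : [set f x; f y] = f @* [set x; y] by rewrite morphimU !morphim_set1.
by rewrite -morphim_gen // injm_cyclic // gen_subG.
Qed.

Lemma ordH m n : 0 < n -> #|Z2m_Zn m n| = (2 ^ m * n)%N.
Proof. by move=> n0; rewrite /Z2m_Zn cardsX cardsT cardA card_Zp. Qed.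

Lemma epg_isog (gT : finGroupType) (G : {group gT}) (m n : nat) :
  0 < m -> 0 < n -> odd n ->
  epg_isomorphic G (Z2m_Zn m n) -> (G \isog Z2m_Zn m n)%g.
Proof.
move=> m0 n0 on [f [injf imf adjf]].
have oG : #|G| = (2 ^ m * n)%N by rewrite -ordH // -imf card_in_imset.
have fH : forall x, x \in G -> f x \in Z2m_Zn m n.
  by move=> x xG; rewrite -imf imset_f.
have f2 : forall x, x \in G -> (f x).2 \in Zp n.
  move=> x xG; have := fH x xG; rewrite /Z2m_Zn.
  by case: (f x) => a b; rewrite in_setX => /andP[].
have cyG : {in G &, forall x y, cy x y = cy (f x) (f y)}.
  move=> x y xG yG; case: (eqVneq x y) => [<-|ne]; first by rewrite !cy_refl.
  have := adjf x y xG yG; rewrite /epg_adj (inj_in_eq injf) // ne /=.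
  by rewrite /cy => ->.
set g := fun x => (f x).1.
have hc : {in G &, forall x y, cy x y = [|| g x == 1, g y == 1 | g x == g y]}.
  by move=> x y xG yG; rewrite cyG // cyH // f2.
have hfib : forall v, #|[set x in G | g x == v]| = n.
  move=> v.
  have inj2 : {in [set x in G | g x == v] &, injective f}.
    by move=> x y; rewrite !inE => /andP[xG _] /andP[yG _]; apply: injf.
  rewrite -(card_in_imset inj2).
  have -> : f @: [set x in G | g x == v] = setX [set v] (Zp n).
    apply/eqP; rewrite eqEsubset; apply/andP; split; apply/subsetP => h.
      case/imsetP => x; rewrite inE => /andP[xG gx] ->.
      move: gx (f2 x xG); rewrite /g; case: (f x) => a b /= gx b2.
      by rewrite in_setX inE gx.
    move=> hin.
    have : h \in Z2m_Zn m n.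
      move: hin; case: h => a b; rewrite !in_setX => /andP[_ ->].
      by rewrite inE.
    rewrite -imf => /imsetP[x xG hx].
    rewrite hx imset_f // inE xG /g.
    by move: hin; rewrite hx; case: (f x) => a b; rewrite in_setX inE => /andP[].
  by rewrite cardsX cards1 mul1n card_Zp.
case: (ltnP 1 m) => m2.
  have hA : forall v : AT m, exists w, (w != 1) && (w != v).
    move=> v; case: (pickP (fun w : AT m => (w != 1) && (w != v))) => [w hw|none].
      by exists w.
    have : [set: AT m] \subset [set 1; v].
      apply/subsetP => w _; move: (none w); rewrite !inE.
      by case: (w == 1); case: (w == v).
    move/subset_leq_card; rewrite cardsT cardA cards2.
    have : (2 ^ 2 <= 2 ^ m)%N by rewrite leq_exp2l.
    by case: (1 != v) => /=; move=> h1 h2; have := leq_trans h1 h2.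
  have [D [oD cD DG cGD sq]] := structure n0 hc hfib hA.
  have [S [dS abS oS]] := dprod_struct oG on oD DG cGD sq.
  rewrite dprodC in dS.
  have dH := setX_dprod [set: AT m]%G (Zp n)%G.
  apply: (isog_dprod dS dH).
    rewrite (isog_abelem_card _ abS) cardsX cardsT cardA cards1 muln1 oS eqxx andbT.
    rewrite -(isog_abelem (isog_setX1 _ [set: AT m]%G)).
    apply/abelemP => //; split.
      by apply/centsP => a _ b _; apply: cmA.
    by move=> a _; rewrite expg2 sqA.
  rewrite (isog_cyclic_card _ cD) cardsX cards1 mul1n card_Zp // oD eqxx andbT.
  by rewrite -(isog_cyclic (isog_set1X _ (Zp n)%G)) Zp_cyc.
have m1 : m = 1%N by apply/eqP; rewrite eqn_leq m2.
have hA1 : forall v w : AT m, v != 1 -> w != 1 -> v = w.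
  move=> v w v1 w1; apply/eqP; apply/negPn/negP => vw.
  have : #|w |: [set 1; v]| <= #|AT m| by apply: max_card.
  have e2 : (2 ^ m = 2)%N by rewrite m1.
  rewrite cardsU1 cards2 cardA e2 !inE (negbTE w1) eq_sym (negbTE vw) eq_sym v1.
  done.
have all1 : forall a b : AT m, [|| a == 1, b == 1 | a == b].
  move=> a b; case: (eqVneq a 1) => //= a1; case: (eqVneq b 1) => //= b1.
  by rewrite (hA1 _ _ a1 b1) eqxx.
have cG : cyclic G.
  by apply: all_cy_cyclic => x y xG yG; rewrite hc // all1.
have cH : cyclic (Z2m_Zn m n).
  apply: (@all_cy_cyclic _ (Z2m_Zn_group m n)) => h h' hH h'H.
  rewrite cyH // ?all1 //.
    by move: hH; rewrite /= /Z2m_Zn; case: h => a b; rewrite in_setX => /andP[].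
  by move: h'H; rewrite /= /Z2m_Zn; case: h' => a b; rewrite in_setX => /andP[].
by rewrite (isog_cyclic_card _ cG) cH ordH // oG eqxx.
Qed.

Local Close Scope group_scope.

Theorem theorem6 (gT : finGroupType) (G : {group gT}) (m n : nat) :
  0 < m -> 0 < n -> odd n ->
  (epg_isomorphic G (Z2m_Zn m n) <-> (G \isog Z2m_Zn m n)%g).
Proof.
move=> m0 n0 on; split; first exact: epg_isog.
exact: isog_epg.
Qed.
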